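(* Let $(\alpha_n)_{n\in\mathbb{N}^+}$ be a sequence in $(0,1)$ converging to $\alpha$, with continued fraction expansions $\alpha_n=[0;a_{n1},a_{n2},\dots]$ and $\alpha=[0;a_1,a_2,\dots]$, and write $\alpha_n=[0;a_{n1},\dots,a_{ni},r_{ni}]$. Suppose that for some $i\in\mathbb{N}^+$ the numbers $a_{n1},\dots,a_{ni}$ ($n\in\mathbb{N}^+$) are bounded. If $(r_{ni})_n$ is not bounded away from $1$ or not bounded away from $\infty$, then $\alpha$ terminates, i.e. $\alpha=[0;a_1,\dots,a_j]$ for some $j\le i$. Moreover, if $a_{n1}\to\infty$ as $n\to\infty$, then $\alpha=0$.
   Context: Continued fraction conventions: $[a_0;a_1,\dots,a_n]$ denotes $a_0+1/(a_1+1/(a_2+\cdots+1/a_n))$ with $a_0\in\mathbb{Z}$, $a_k\in\mathbb{N}^+$ for $1\le k<n$, and last element $a_n>1$. Every real number is identified with its unique continued fraction; a terminating expansion is also written as $[a_0;a_1,\dots,a_n,0,0,\dots]$, with $[a_0;0,0,\dots]=a_0$. For $\alpha=[a_0;a_1,a_2,\dots]$ and $i\ge1$, $\alpha=[a_0;a_1,\dots,a_i,r_i]$ where $r_i:=a_{i+1}+[0;a_{i+2},a_{i+3},\dots]$. *)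

(* Defs.v *)
From HB Require Import structures.
From mathcomp Require Import all_boot all_order all_algebra.
From mathcomp Require Import all_classical all_reals all_analysis.
Set Implicit Arguments. Unset Strict Implicit. Unset Printing Implicit Defensive.
Import Order.TTheory GRing.Theory Num.Theory.
Local Open Scope ring_scope.

(* Gauss map T(x) = 1/x - floor(1/x); note 0^-1 = 0 in MathComp, so T(0) = 0. *)
Definition gauss {R : realType} (x : R) : R := x^-1 - (Num.truncn (x^-1))%:R.

(* k-th partial quotient a_k(x) (k >= 1) of x in [0,1]:
   a_k(x) = floor(1 / T^(k-1)(x)); it is 0 once the expansion has terminated,
   matching the convention [a_0;a_1,...,a_n,0,0,...]. *)
Definition cf_a {R : realType} (x : R) (k : nat) : nat :=
  Num.truncn ((iter k.-1 gauss x)^-1).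

(* r_i(x) := a_{i+1} + [0; a_{i+2}, a_{i+3}, ...]  (and [0;a_{i+2},...] = T^(i+1) x) *)
Definition cf_r {R : realType} (x : R) (i : nat) : R :=
  (cf_a x i.+1)%:R + iter i.+1 gauss x.

Definition cfeval {R : realType} (s : seq nat) : R :=
  foldr (fun a v => (a%:R + v)^-1) 0 s.

(* Main.v *)
Require Import Defs.
From HB Require Import structures.
From mathcomp Require Import all_boot all_order all_algebra.
From mathcomp Require Import all_classical all_reals all_analysis.
From mathcomp Require Import ring lra.
Import Order.TTheory GRing.Theory Num.Theory numFieldNormedType.Exports.
Local Open Scope classical_set_scope.
Local Open Scope ring_scope.


Definition stepf {R : realType} (a : nat) (v : R) := (a%:R + v)^-1.
Definition FF {R : realType} (c : seq nat) (t : R) := foldr stepf t c.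

Lemma gauss_rng (R : realType) (x : R) : 0 <= x -> 0 <= gauss x < 1.
Proof.
move=> x0; rewrite /gauss.
have /andP[h1 h2] : (Num.truncn x^-1)%:R <= x^-1 < (Num.truncn x^-1).+1%:R.
  by apply: truncn_itv; rewrite invr_ge0.
rewrite -natr1 in h2.
apply/andP; split; lra.
Qed.

Lemma iter_rng (R : realType) k (x : R) : 0 <= x < 1 -> 0 <= iter k gauss x < 1.
Proof.
move=> hx; elim: k => [|k IH] //=.
by apply: gauss_rng; case/andP: IH.
Qed.

Lemma gauss0 (R : realType) : gauss (0 : R) = 0.
Proof. by rewrite /gauss invr0 truncn0 subr0. Qed.

Lemma iter0g (R : realType) k : iter k gauss (0 : R) = 0.
Proof. by elim: k => [|k IH] //=; rewrite IH gauss0. Qed.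

Lemma map_shift (R : realType) (x : R) j :
  [seq cf_a x k | k <- iota 1 j.+1] = cf_a x 1 :: [seq cf_a (gauss x) k | k <- iota 1 j].
Proof.
rewrite /= (iotaDl 1 1) -map_comp; congr (_ :: _).
apply/eq_in_map => k; rewrite mem_iota => /andP[k1 _] /=.
rewrite /cf_a /= -iterSr; by case: k k1.
Qed.

Lemma decomp (R : realType) k (x : R) :
  x = FF [seq cf_a x k | k <- iota 1 k] (iter k gauss x).
Proof.
elim: k x => [|k IH] x; first by [].
rewrite map_shift iterSr /= -IH /stepf /cf_a /= /gauss.
by rewrite addrC subrK invrK.
Qed.

Lemma cf_rE (R : realType) (x : R) i : cf_r x i = (iter i gauss x)^-1.
Proof. by rewrite /cf_r /cf_a /= /gauss addrC subrK. Qed.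

Lemma FF_rng (R : realType) c (t : R) : all (fun b => 0 < b)%N c -> 0 <= t <= 1 ->
  0 <= FF c t <= 1.
Proof.
move=> hc ht; elim: c hc => [|b c IH] //= /andP[b0 /IH /andP[h1 h2]].
have b1 : 1 <= (b%:R : R) by rewrite ler1n.
rewrite /stepf invr_ge0 invf_le1; last lra.
apply/andP; split; lra.
Qed.

Lemma inv_contr (R : realType) (p q : R) : 1 <= p -> 1 <= q -> `|p^-1 - q^-1| <= `|p - q|.
Proof.
move=> p1 q1.
have -> : p^-1 - q^-1 = (q - p) * (p^-1 * q^-1).
  by field; apply/andP; split; apply/negP => /eqP; lra.
rewrite normrM distrC -{2}(mulr1 `|p - q|).
apply: ler_wpM2l => //.
rewrite normrM ger0_norm ?invr_ge0 ?ger0_norm ?invr_ge0; try lra.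
rewrite -(mulr1 1); apply: ler_pM; rewrite ?invr_ge0 ?invf_le1; lra.
Qed.

Lemma FF_contr (R : realType) c (t t' : R) : all (fun b => 0 < b)%N c ->
  0 <= t <= 1 -> 0 <= t' <= 1 -> `|FF c t - FF c t'| <= `|t - t'|.
Proof.
move=> hc ht ht'; elim: c hc => [|b c IH] //= hc.
have /andP[b0 hc'] := hc.
have b1 : 1 <= (b%:R : R) by rewrite ler1n.
have /andP[u0 u1] := FF_rng _ _ _ hc' ht.
have /andP[v0 v1] := FF_rng _ _ _ hc' ht'.
apply: le_trans (IH hc'); rewrite /stepf.
apply: le_trans (inv_contr _ _ _ _ _) _; try lra.
rewrite opprD addrACA subrr add0r; lra.
Qed.

Fixpoint tuples (B k : nat) : seq (seq nat) :=
  if k is k'.+1 then [seq b :: c | b <- iota 1 B, c <- tuples B k'] else [:: [::]].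

Lemma mem_tuples B k c : size c = k -> all (fun b => 0 < b <= B)%N c -> c \in tuples B k.
Proof.
elim: k c => [|k IH] [|b c] //= [sc] /andP[hb hc].
apply: (allpairs_f (fun b c => b :: c)); last exact: IH.
by rewrite mem_iota add1n ltnS.
Qed.

Lemma tuples_mem B k c : c \in tuples B k -> size c = k /\ all (fun b => 0 < b)%N c.
Proof.
elim: k c => [|k IH] c /=; first by rewrite inE => /eqP ->.
case/allpairsP => -[b c'] /= [hb hc ->].
have [sc ac] := IH _ hc; rewrite /= sc ac andbT; split => //.
by move: hb; rewrite mem_iota => /andP[].
Qed.

Lemma closure_seq (R : realType) (V : seq R) a :
  (forall e, 0 < e -> exists2 v, v \in V & `|a - v| < e) -> a \in V.
Proof.
elim: V => [|v V IH] H.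
  by have [v] := H 1 ltr01.
rewrite inE; case: (eqVneq a v) => //= nav; apply: IH => e e0.
have d0 : 0 < Num.min e `|a - v| by rewrite lt_min e0 normr_gt0 subr_eq0.
have [w] := H _ d0; rewrite inE lt_min => /orP[/eqP ->|wV] /andP[h1 h2].
  by rewrite ltxx in h2.
by exists w.
Qed.

Lemma cfeval_FF (R : realType) s : cfeval s = FF s (0 : R).
Proof. by []. Qed.

Lemma cfeval_cons (R : realType) a s : cfeval (a :: s) = (a%:R + cfeval s)^-1 :> R.
Proof. by []. Qed.

Lemma cf_of_eval (R : realType) (s : seq nat) m (x : R) : (size s <= m)%N ->
  all (fun b => 0 < b)%N s -> x = cfeval s ->
  exists j, (j <= m)%N /\ x = cfeval [seq cf_a x k | k <- iota 1 j].
Proof.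
elim: s m x => [|b s IH] m x.
  by move=> _ _ ->; exists 0%N.
case: m => [|m] // sm /andP[b0 hs]; rewrite cfeval_cons => xE.
have {}sm : (size s <= m)%N by [].
have yr : 0 <= (cfeval s : R) <= 1.
  by rewrite cfeval_FF; apply: (FF_rng R s 0 hs); rewrite lexx ler01.
case/andP: yr => y0 y1.
have b1 : 1 <= (b%:R : R) by rewrite ler1n.
case: (eqVneq (cfeval s : R) 1) => [yE|yn].
  exists 1%N; split => //.
  rewrite cfeval_cons /cf_a /= xE yE invrK natr1 natrK addr0.
  by [].
have ylt : (cfeval s : R) < 1 by rewrite lt_neqAle yn y1.
have t : cf_a x 1 = b.
  rewrite /cf_a /= xE invrK; apply: truncn_def; rewrite -natr1.
  apply/andP; split; lra.
have g : gauss x = cfeval s.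
  have t' : Num.truncn x^-1 = b := t.
  by rewrite /gauss t' xE invrK [_ + cfeval s]addrC addrK.
have [j [hj E]] := IH m (gauss x) sm hs g.
exists j.+1; split => //.
by rewrite map_shift cfeval_cons t -E g.
Qed.

Lemma inf_often (R : realType) (f : nat -> R) :
  (forall n, (0 < n)%N -> 0 < f n) ->
  (forall e, 0 < e -> exists n, (0 < n)%N /\ f n < e) ->
  forall N e, 0 < e -> exists n, (N <= n)%N /\ (0 < n)%N /\ f n < e.
Proof.
move=> fpos H; elim=> [|N IH] e e0.
  by have [n [n0 fn]] := H e e0; exists n.
have [n [Nn [n0 fn]]] := IH e e0.
case: (ltngtP N n) => [Nn'|nN|NE].
- by exists n.
- by rewrite leqNgt nN in Nn.
have d0 : 0 < Num.min e (f n) by rewrite lt_min e0 fpos.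
have [m [Nm [m0 fm]]] := IH _ d0.
exists m; move: fm; rewrite lt_min => /andP[fe fm]; split; last by [].
rewrite ltn_neqAle Nm andbT; apply/eqP => E; subst.
by rewrite ltxx in fm.
Qed.

Lemma cvg_eps (R : realType) (u : nat -> R) a : u n @[n --> \oo] --> a ->
  forall e, 0 < e -> exists N, forall n, (N <= n)%N -> `|a - u n| < e.
Proof.
move=> /cvgrPdist_lt H e e0; have [N _ HN] := H e e0.
by exists N => n /HN.
Qed.

Lemma part2 (R : realType) (alpha_ : nat -> R) (alpha : R) :
  (forall n, (0 < n)%N -> 0 < alpha_ n < 1) ->
  alpha_ n @[n --> \oo] --> alpha ->
  ((forall M : nat, exists N : nat, forall n, (N <= n)%N -> (M <= cf_a (alpha_ n) 1)%N) ->
   alpha = 0).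
Proof.
move=> Hr Hc HM; apply/eqP; apply/negP => /negP an0.
have a0 : 0 < `|alpha| by rewrite normr_gt0.
have [N1 HN1] := cvg_eps _ _ _ Hc (`|alpha| / 2) (ltac:(lra)).
have [N2 HN2] := HM (Num.truncn (2 / `|alpha|)).+1.
pose n := (maxn 1 (maxn N1 N2)).
have n0 : (0 < n)%N by rewrite leq_max.
have h1 := HN1 n (leq_trans (leq_maxl _ _) (leq_maxr _ _)).
have h2 := HN2 n (leq_trans (leq_maxr _ _) (leq_maxr _ _)).
have /andP[p0 p1] := Hr n n0.
have hT := truncnS_gt (2 / `|alpha|).
have hT2 : (Num.truncn (2 / `|alpha|)).+1%:R <= (alpha_ n)^-1.
  by rewrite -truncn_ge_nat ?invr_ge0 ?ltW.
have : 2 / `|alpha| < (alpha_ n)^-1 by apply: lt_le_trans hT2.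
have : `|alpha_ n| >= `|alpha| / 2.
  have := ler_distD (alpha_ n) alpha 0; rewrite !subr0; lra.
rewrite (gtr0_norm p0) => hx hy.
have : (alpha_ n)^-1 <= 2 / `|alpha|.
  rewrite -[2 / `|alpha|]invrK invf_div lef_pV2 ?posrE //; last by rewrite divr_gt0.
lra.
Qed.

Lemma part1 (R : realType) (alpha_ : nat -> R) (alpha : R) :
  (forall n, (0 < n)%N -> 0 < alpha_ n < 1) ->
  alpha_ n @[n --> \oo] --> alpha ->
  (forall i : nat, (0 < i)%N ->
     (exists B : nat, forall n, (0 < n)%N ->
         forall k, (1 <= k <= i)%N -> (cf_a (alpha_ n) k <= B)%N) ->
     (~ (exists eps : R, 0 < eps /\
           forall n, (0 < n)%N -> eps <= `|cf_r (alpha_ n) i - 1|)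
      \/ ~ (exists M : R, forall n, (0 < n)%N -> cf_r (alpha_ n) i <= M)) ->
     exists j : nat, (j <= i)%N /\
       alpha = cfeval [seq cf_a alpha k | k <- iota 1 j]).
Proof.
move=> Hr Hc i i0 [B HB] Hd.
pose t n := iter i gauss (alpha_ n).
pose c n := [seq cf_a (alpha_ n) k | k <- iota 1 i].
have trng n : (0 < n)%N -> 0 <= t n < 1.
  by move=> n0; apply: iter_rng; have /andP[h1 h2] := Hr n n0; rewrite ltW.
have rE n : cf_r (alpha_ n) i = (t n)^-1 by apply: cf_rE.
have KEY : forall N e, 0 < e -> exists n, [/\ (N <= n)%N, (0 < n)%N, 0 < t n &
    (t n < e \/ 1 - t n < e)].
  case: Hd => Hd.
  - have H1 : forall e, 0 < e -> exists n, (0 < n)%N /\ `|cf_r (alpha_ n) i - 1| < e.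
      move=> e e0; case: (pselect (exists n, (0 < n)%N /\ `|cf_r (alpha_ n) i - 1| < e)) => // hn.
      exfalso; apply: Hd; exists e; split => // n n0; rewrite leNgt; apply/negP => h.
      by apply: hn; exists n.
    have fpos : forall n, (0 < n)%N -> 0 < `|cf_r (alpha_ n) i - 1|.
      move=> n n0; rewrite normr_gt0 subr_eq0 rE; apply/eqP => h.
      have := congr1 GRing.inv h; rewrite invrK invr1 => h'.
      have := trng n n0; rewrite h'; lra.
    move=> N e e0.
    have e1 : 0 < Num.min e (1/2) by rewrite lt_min e0; lra.
    have [n [Nn [n0 hn]]] := inf_often _ _ fpos H1 N _ e1.
    move: hn; rewrite lt_min rE => /andP[he hh].
    have /andP[tn0 tn1] := trng n n0.
    have tpos : 0 < t n.
      rewrite lt_neqAle tn0 andbT; apply/eqP => E; rewrite -E invr0 sub0r normrN normr1 in hh; lra.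
    exists n; split => //; right.
    have tr : t n * (t n)^-1 = 1 by rewrite mulfV // gt_eqF.
    have := ler_norm ((t n)^-1 - 1); nra.
  - have H1 : forall M, exists n, (0 < n)%N /\ M < cf_r (alpha_ n) i.
      move=> M; case: (pselect (exists n, (0 < n)%N /\ M < cf_r (alpha_ n) i)) => // hn.
      exfalso; apply: Hd; exists M => n n0; rewrite leNgt; apply/negP => h.
      by apply: hn; exists n.
    pose f n := (1 + `|cf_r (alpha_ n) i|)^-1.
    have upos n : 0 < 1 + `|cf_r (alpha_ n) i| by have := normr_ge0 (cf_r (alpha_ n) i); lra.
    have fu n : f n * (1 + `|cf_r (alpha_ n) i|) = 1 by rewrite mulVf // gt_eqF.
    have fpos : forall n, (0 < n)%N -> 0 < f n by move=> n _; rewrite invr_gt0.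
    have H2 : forall e, 0 < e -> exists n, (0 < n)%N /\ f n < e.
      move=> e e0; have [n [n0 hn]] := H1 e^-1; exists n; split => //.
      rewrite /f -[e]invrK ltf_pV2 ?posrE ?invr_gt0 //.
      have := ler_norm (cf_r (alpha_ n) i); lra.
    move=> N e e0.
    have e1 : 0 < Num.min (e / 2) (1/2) by rewrite lt_min; apply/andP; split; lra.
    have [n [Nn [n0 hn]]] := inf_often _ _ fpos H2 N _ e1.
    move: hn; rewrite lt_min => /andP[he hh].
    have /andP[tn0 tn1] := trng n n0.
    have fun' := fu n; have fp := fpos n n0.
    move: he hh fun' fp; rewrite /f rE => he hh fun' fp.
    have tpos : 0 < t n.
      rewrite lt_neqAle tn0 andbT; apply/eqP => E; rewrite -E invr0 normr0 addr0 invr1 in hh; lra.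
    exists n; split => //; left.
    have tr : t n * (t n)^-1 = 1 by rewrite mulfV // gt_eqF.
    rewrite gtr0_norm ?invr_gt0 // in he fun'.
    set ff := (1 + (t n)^-1)^-1 in he fun' fp.
    have E : ff * (t n + 1) - t n = ff * (1 - t n * (t n)^-1).
      by rewrite -{2}[t n]mulr1 -fun'; ring.
    rewrite tr subrr mulr0 in E; nra.
pose V : seq R := [seq FF c0 0 | c0 <- tuples B i] ++ [seq FF c0 1 | c0 <- tuples B i].
have aV : alpha \in V.
  apply: (closure_seq R V alpha) => e e0.
  have [N HN] := cvg_eps _ _ _ Hc (e / 2) (ltac:(lra)).
  have [n [Nn n0 tpos tn]] := KEY N (e / 2) (ltac:(lra)).
  have /andP[tn0 tn1] := trng n n0.
  have cn : c n \in tuples B i.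
    apply: mem_tuples; first by rewrite size_map size_iota.
    apply/allP => b /mapP[k hk ->]; rewrite mem_iota add1n ltnS in hk.
    rewrite HB // andbT /cf_a truncn_gt0.
    case/andP: hk => k1 ki.
    have yr : 0 <= iter k.-1 gauss (alpha_ n) < 1.
      by apply: iter_rng; have /andP[h1 h2] := Hr n n0; rewrite ltW.
    case/andP: yr => y0 y1.
    have ypos : 0 < iter k.-1 gauss (alpha_ n).
      rewrite lt_neqAle y0 andbT; apply/eqP => E.
      move: tpos; rewrite /t -(subnK (_ : k.-1 <= i)%N); last by rewrite (leq_trans (leq_pred _)).
      by rewrite iterD -E iter0g ltxx.
    by rewrite invf_ge1 // ltW.
  have [_ pc] := tuples_mem _ _ _ cn.
  have dec : alpha_ n = FF (c n) (t n) := decomp R i (alpha_ n).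
  have h1 := HN n Nn.
  case: tn => h.
  - exists (FF (c n) 0); first by rewrite mem_cat; apply/orP; left; apply: map_f.
    have := FF_contr R (c n) (t n) 0 pc (ltac:(rewrite tn0 ltW)) (ltac:(rewrite lexx ler01)).
    rewrite subr0 (ger0_norm tn0) -dec => h2.
    have := ler_distD (alpha_ n) alpha (FF (c n) 0); lra.
  - exists (FF (c n) 1); first by rewrite mem_cat; apply/orP; right; apply: map_f.
    have := FF_contr R (c n) (t n) 1 pc (ltac:(rewrite tn0 ltW)) (ltac:(rewrite ler01 lexx)).
    rewrite (distrC (t n)) (ger0_norm (ltac:(lra) : 0 <= 1 - t n)) -dec => h2.
    have := ler_distD (alpha_ n) alpha (FF (c n) 1); lra.
move: aV; rewrite mem_cat => /orP[] /mapP[c0 hc ->]; have [sc pc] := tuples_mem _ _ _ hc.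
- by apply: (cf_of_eval R c0 i); rewrite ?sc.
- move: sc pc; case/lastP: c0 hc => [|c' b] hc sc pc; first by move: i0; rewrite -sc.
  have -> : FF (rcons c' b) (1 : R) = cfeval (rcons c' b.+1).
    by rewrite cfeval_FF /FF !foldr_rcons /stepf addr0 natr1.
  apply: (cf_of_eval R (rcons c' b.+1) i) => //; first by rewrite size_rcons -sc size_rcons.
  by move: pc; rewrite !all_rcons => /andP[_ ->].
Qed.
Theorem lemma3 (R : realType) (alpha_ : nat -> R) (alpha : R) :
  (forall n, (0 < n)%N -> 0 < alpha_ n < 1) ->
  alpha_ n @[n --> \oo] --> alpha ->
  (forall i : nat, (0 < i)%N ->
     (exists B : nat, forall n, (0 < n)%N ->
         forall k, (1 <= k <= i)%N -> (cf_a (alpha_ n) k <= B)%N) ->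
     (~ (exists eps : R, 0 < eps /\
           forall n, (0 < n)%N -> eps <= `|cf_r (alpha_ n) i - 1|)
      \/ ~ (exists M : R, forall n, (0 < n)%N -> cf_r (alpha_ n) i <= M)) ->
     exists j : nat, (j <= i)%N /\
       alpha = cfeval [seq cf_a alpha k | k <- iota 1 j])
  /\
  ((forall M : nat, exists N : nat, forall n, (N <= n)%N -> (M <= cf_a (alpha_ n) 1)%N) ->
   alpha = 0).
Proof.
move=> Hr Hc; split; [exact: (part1 _ _ _ Hr Hc) | exact: (part2 _ _ _ Hr Hc)].
Qed.
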